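(* Let $(X_1,\prec_1)$, $(X_2,\prec_2)$ be finite strict posets. (i) If $(X_1\dot\cup X_2,A,\prec)$ is an alignment of these two posets, then $R=\{(x,y)\in X_1\times X_2:\{x,y\}\in A\}$ satisfies (M) and (P'), $A$ consists exactly of the edges $\{x,y\}$ with $(x,y)\in R$, and the columns are exactly the sets $\{x,y\}$ with $(x,y)\in R$ together with the singletons $\{z\}$ of elements $z$ not occurring in any pair of $R$. (ii) Conversely, if $R\subseteq X_1\times X_2$ satisfies (M) and (P'), then for the graph $(X_1\dot\cup X_2,R)$ (with edges $\{x,y\}$ for $(x,y)\in R$), whose columns are the pairs $\{x,y\}$, $(x,y)\in R$, and the singletons of unmatched elements, there exists a strict partial order $\prec$ on its columns such that $(X_1\dot\cup X_2,R,\prec)$ is an alignment of $(X_1,\prec_1)$ and $(X_2,\prec_2)$.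
   Context: Given a family of finite strict posets $(X_a,\prec_a)$, $a\in I$, with $X=\dot\bigcup_a X_a$ and a simple undirected graph $(X,A)$ with set of connected components (''columns'') $\mathcal{C}(X,A)$, an alignment is a triple $(X,A,\prec)$ where $\prec$ is a strict partial order on $\mathcal{C}(X,A)$ such that: (P1) every column induces a complete subgraph; (P2) every column contains at most one element of each $X_a$; (P3) if $x\in P$, $y\in Q$ with $x,y\in X_a$ and $x\prec_a y$ then $P\prec Q$; (P4) if $P\prec Q$, $x\in P$, $y\in Q$ with $x,y\in X_a$, then $x\prec_a y$ or $x,y$ are incomparable w.r.t. $\prec_a$. For a relation $R\subseteq X_1\times X_2$: (M) means $(x,y),(x,z)\in R$ imply $y=z$, and $(x,z),(y,z)\in R$ imply $x=y$; (P') means there is a strict partial order $\lessdot$ on $R$ such that for $(u,v),(x,y)\in R$, $u\prec_1 x$ or $v\prec_2 y$ implies $(u,v)\lessdot(x,y)$. *)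

(* Defs.v *)
From mathcomp Require Import all_boot.
Set Implicit Arguments. Unset Strict Implicit. Unset Printing Implicit Defensive.

Section Alignment.
Variables (T1 T2 : finType).
Notation X := (T1 + T2)%type.

Definition strict_po (T : Type) (lt : rel T) : Prop :=
  (forall x, ~~ lt x x) /\ (forall x y z, lt x y -> lt y z -> lt x z).

Definition side (x : X) : bool := if x is inl _ then true else false.

(* the family of orders, as one relation on the disjoint union;
   elements of different X_a are never related *)
Definition ltX (lt1 : rel T1) (lt2 : rel T2) : rel X :=
  fun x y => match x, y with
             | inl a, inl b => lt1 a b
             | inr a, inr b => lt2 a b
             | _, _ => false
             end.

Definition cols (A : rel X) : {set {set X}} :=
  [set [set y | connect A x y] | x : X].

Definition simple_graph (A : rel X) : Prop :=
  (forall x, ~~ A x x) /\ (forall x y, A x y = A y x).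

Definition incomparable (T : Type) (lt : rel T) (x y : T) : Prop :=
  x <> y /\ ~~ lt x y /\ ~~ lt y x.

Definition alignment (lt1 : rel T1) (lt2 : rel T2) (A : rel X)
  (prec : rel {set X}) : Prop :=
  simple_graph A /\
  (forall P, P \in cols A -> ~~ prec P P) /\
  (forall P Q S, P \in cols A -> Q \in cols A -> S \in cols A ->
      prec P Q -> prec Q S -> prec P S) /\
  (forall P, P \in cols A -> forall x y, x \in P -> y \in P -> x != y -> A x y) /\
  (forall P, P \in cols A -> forall x y, x \in P -> y \in P ->
      side x = side y -> x = y) /\
  (forall P Q, P \in cols A -> Q \in cols A -> forall x y, x \in P -> y \in Q ->
      ltX lt1 lt2 x y -> prec P Q) /\
  (forall P Q, P \in cols A -> Q \in cols A -> prec P Q -> forall x y,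
      x \in P -> y \in Q -> side x = side y ->
      ltX lt1 lt2 x y \/ incomparable (ltX lt1 lt2) x y).

Definition propM (R : T1 -> T2 -> bool) : Prop :=
  (forall x y z, R x y -> R x z -> y = z) /\
  (forall x y z, R x z -> R y z -> x = y).

Definition propP' (lt1 : rel T1) (lt2 : rel T2) (R : T1 -> T2 -> bool) : Prop :=
  exists ld : rel (T1 * T2),
    (forall p, R p.1 p.2 -> ~~ ld p p) /\
    (forall p q r, R p.1 p.2 -> R q.1 q.2 -> R r.1 r.2 -> ld p q -> ld q r -> ld p r) /\
    (forall u v x y, R u v -> R x y -> lt1 u x || lt2 v y -> ld (u, v) (x, y)).

Definition graphR (R : T1 -> T2 -> bool) : rel X :=
  fun a b => match a, b with
             | inl x, inr y => R x y
             | inr y, inl x => R x y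
             | _, _ => false
             end.

Definition matched (R : T1 -> T2 -> bool) (z : X) : bool :=
  match z with
  | inl x => [exists y, R x y]
  | inr y => [exists x, R x y]
  end.

Definition colsR (R : T1 -> T2 -> bool) : {set {set X}} :=
  [set [set inl p.1; inr p.2] | p in [set p : T1 * T2 | R p.1 p.2]]
  :|: [set [set z] | z in [set z : X | ~~ matched R z]].

End Alignment.

(* Main.v *)
Require Import Defs.
From mathcomp Require Import all_boot.
Set Implicit Arguments. Unset Strict Implicit. Unset Printing Implicit Defensive.

Section S.
Variables (T1 T2 : finType).
Local Notation X := (T1 + T2)%type.

Definition colx (A : rel X) (x : X) : {set X} := [set y | connect A x y].

Lemma mem_cols (A : rel X) : (forall x y, A x y = A y x) ->
  forall K x, K \in cols A -> x \in K -> K = colx A x.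
Proof.
move=> As K x /imsetP[z _ ->]; rewrite inE => zx.
have cs : connect_sym A by apply: sym_connect_sym.
apply/setP=> y; rewrite !inE; apply/idP/idP => H.
- by apply: connect_trans _ H; rewrite cs.
- exact: connect_trans zx H.
Qed.

Lemma colx_in (A : rel X) x : colx A x \in cols A.
Proof. exact: imset_f. Qed.

Lemma closed_path (A : rel X) (S : {set X}) x y :
  x \in S -> (forall a b, a \in S -> A a b -> b \in S) -> connect A x y -> y \in S.
Proof.
move=> xS cl /connectP[p pp ->].
elim: p x xS pp => //= b p IH a aS /andP[ab pp].
exact: IH (cl _ _ aS ab) pp.
Qed.

Lemma cols_eq (A : rel X) (R : T1 -> T2 -> bool) :
  (forall u v, R u v -> colx A (inl u) = [set inl u; inr v] /\
                        colx A (inr v) = [set inl u; inr v]) ->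
  (forall z, ~~ matched R z -> colx A z = [set z]) ->
  cols A = colsR R.
Proof.
move=> Hp Hs; apply/setP => K; apply/idP/idP.
- case/imsetP => x _ ->; rewrite -/(colx A x) /colsR in_setU.
  case mx: (matched R x).
  + case: x mx => [u|v] /= /existsP [w Rw].
    * apply/orP; left; apply/imsetP; exists (u, w); first by rewrite inE.
      by rewrite (Hp _ _ Rw).1.
    * apply/orP; left; apply/imsetP; exists (w, v); first by rewrite inE.
      by rewrite (Hp _ _ Rw).2.
  + apply/orP; right; apply/imsetP; exists x; first by rewrite inE mx.
    by rewrite Hs ?mx.
- rewrite /colsR in_setU => /orP [] /imsetP [p].
  + rewrite inE => Rp ->; rewrite -(Hp _ _ Rp).1; exact: colx_in.
  + rewrite inE => mp ->; rewrite -(Hs _ mp); exact: colx_in.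
Qed.

Lemma ltX_side (lt1 : rel T1) (lt2 : rel T2) a b :
  ltX lt1 lt2 a b -> side a = side b.
Proof. by case: a; case: b. Qed.

Lemma part1 (lt1 : rel T1) (lt2 : rel T2) (A : rel X) (prec : rel {set X}) :
     alignment lt1 lt2 A prec ->
     let R := fun (x : T1) (y : T2) => A (inl x) (inr y) in
     [/\ propM R, propP' lt1 lt2 R,
         (forall a b : X, A a b <->
            exists x y, R x y /\
              ((a = inl x /\ b = inr y) \/ (a = inr y /\ b = inl x)))
       & cols A = colsR R].
Proof.
move=> [[Airr Asym] [pirr [ptr [P1 [P2 [P3 P4]]]]]] R.
have inx x : x \in colx A x by rewrite inE.
have iny x y : A x y -> y \in colx A x by move=> H; rewrite inE connect1.
have F1 x y : A x y -> side x != side y.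
  move=> Axy; apply/negP => /eqP sxy.
  have := P2 _ (colx_in A x) _ _ (inx x) (iny _ _ Axy) sxy => E.
  by move: Axy; rewrite E (negbTE (Airr y)).
have sidene x y z : side x != side y -> side x != side z -> side y = side z.
  by case: (side x); case: (side y); case: (side z).
have uniq1 x y z : A x y -> A x z -> y = z.
  move=> Axy Axz; apply: (P2 _ (colx_in A x)); [exact: iny|exact: iny|].
  exact: sidene (F1 _ _ Axy) (F1 _ _ Axz).
have colP x w : A x w -> colx A x = [set x; w].
  move=> Axw; apply/setP => z; rewrite ![in RHS]inE; apply/idP/idP.
  - move=> zc; case: (eqVneq z x) => [->|xz]; first by [].
    have := P1 _ (colx_in A x) _ _ (inx x) zc (contra_neq (@esym _ _ _) xz) => Axz.
    by rewrite (uniq1 _ _ _ Axz Axw) eqxx orbT.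
  - by case/orP => /eqP ->; [rewrite inx| rewrite iny].
have colS x : (forall w, ~~ A x w) -> colx A x = [set x].
  move=> H; apply/setP => z; rewrite ![in RHS]inE; apply/idP/idP.
  - move=> zc; case: (eqVneq z x) => [_|xz]; first by [].
    by have := P1 _ (colx_in A x) _ _ (inx x) zc (contra_neq (@esym _ _ _) xz); rewrite (negbTE (H z)).
  - by move/eqP ->.
have colsE : cols A = colsR R.
  apply: cols_eq.
  - move=> u v Ruv; split; first exact: colP.
    rewrite (colP _ _ (_ : A (inr v) (inl u))); first by rewrite setUC.
    by rewrite Asym.
  - move=> [u|v] /= nm; apply: colS => -[w|w].
    + by apply/negP => /F1.
    + by apply/negP => Aw; move: nm; rewrite negb_exists => /forallP /(_ w); rewrite /R Aw.
    + by apply/negP => Aw; move: nm; rewrite negb_exists => /forallP /(_ w); rewrite /R Asym Aw.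
    + by apply/negP => /F1.
split => //.
- split.
  + move=> x y z Rxy Rxz; apply: (@inr_inj T1 T2).
    exact: uniq1 Rxy Rxz.
  + move=> x y z Rxz Ryz; apply: (@inl_inj T1 T2).
    by apply: (uniq1 (inr z)); rewrite Asym.
- have pcol u v : R u v -> [set inl u; inr v] \in cols A.
    move=> Ruv; rewrite colsE /colsR in_setU; apply/orP; left.
    by apply/imsetP; exists (u, v); rewrite ?inE.
  exists (fun p q => prec [set inl p.1; inr p.2] [set inl q.1; inr q.2]).
  split; [|split].
  + move=> p Rp; exact: pirr (pcol _ _ Rp).
  + move=> p q r Rp Rq Rr; apply: ptr; exact: pcol.
  + move=> u v x y Ruv Rxy /orP [] H.
    * apply: (P3 _ _ (pcol _ _ Ruv) (pcol _ _ Rxy) (inl u) (inl x)) => //;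
        by rewrite !inE eqxx.
    * apply: (P3 _ _ (pcol _ _ Ruv) (pcol _ _ Rxy) (inr v) (inr y)) => //;
        by rewrite !inE eqxx orbT.
- move=> a b; split.
  + move=> Aab; have := F1 _ _ Aab.
    case: a Aab => [x|y]; case: b => [x'|y'] //= Aab _.
    * by exists x, y'; split; [|left].
    * by exists x', y; split; [rewrite /R Asym|right].
  + by move=> [x [y [Rxy [[-> ->]|[-> ->]]]]]; rewrite // Asym.
Qed.

Lemma part2 (lt1 : rel T1) (lt2 : rel T2) :
  strict_po lt1 -> strict_po lt2 ->
  forall R : T1 -> T2 -> bool,
     propM R -> propP' lt1 lt2 R ->
     cols (graphR R) = colsR R /\
     exists prec : rel {set X}, alignment lt1 lt2 (graphR R) prec.
Proof.
move=> [irr1 tr1] [irr2 tr2] R [M1 M2] [ld [ldirr [ldtr ldlt]]].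
set G := graphR R.
have gsym a b : G a b = G b a by case: a; case: b.
have girr a : ~~ G a a by case: a.
have guniq a b c : G a b -> G a c -> b = c.
  case: a => [u|v]; case: b => [x|y]; case: c => [x'|y'] //= H1 H2.
  - by rewrite (M1 _ _ _ H1 H2).
  - by rewrite (M2 _ _ _ H1 H2).
have gmatch a b : G a b -> matched R a.
  case: a => [u|v]; case: b => [x|y] //= H; apply/existsP; by eexists; exact: H.
have gpair x w : G x w -> colx G x = [set x; w].
  move=> Gxw; apply/setP => z; rewrite ![in RHS]inE; apply/idP/idP.
  - rewrite inE => Hc; suff: z \in [set x; w] by rewrite !inE.
    apply: (closed_path _ _ Hc); first by rewrite !inE eqxx.
    move=> a b; rewrite !inE => /orP [] /eqP -> Gab.
    + by rewrite (guniq _ _ _ Gab Gxw) eqxx orbT.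
    + by rewrite (guniq _ _ _ Gab (_ : G w x)) ?eqxx // gsym.
  - by rewrite inE => /orP [] /eqP ->; [exact: connect0|exact: connect1].
have gsing z : ~~ matched R z -> colx G z = [set z].
  move=> nm; apply/setP => y; rewrite ![in RHS]inE; apply/idP/idP.
  - rewrite inE => Hc; suff: y \in [set z] by rewrite !inE.
    apply: (closed_path _ _ Hc); first by rewrite !inE eqxx.
    move=> a b; rewrite !inE => /eqP -> Gzb.
    by move: nm; rewrite (gmatch _ _ Gzb).
  - by rewrite inE => /eqP ->; exact: connect0.
have colsE : cols G = colsR R.
  apply: cols_eq => //.
  move=> u v Ruv; split; first exact: gpair.
  rewrite (gpair (inr v) (inl u)); first by rewrite setUC.
  by rewrite gsym.
split => //.
pose pc (p : T1 * T2) : {set X} := [set inl p.1; inr p.2].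
have colsR_cases K : K \in colsR R ->
    (exists p, R p.1 p.2 /\ K = pc p) \/ (exists z, ~~ matched R z /\ K = [set z]).
  rewrite /colsR in_setU => /orP [] /imsetP [p].
  - by rewrite inE => Rp ->; left; exists p.
  - by rewrite inE => mp ->; right; exists p.
have ltXtr a b c : ltX lt1 lt2 a b -> ltX lt1 lt2 b c -> ltX lt1 lt2 a c.
  case: a => [a|a]; case: b => [b|b]; case: c => [c|c] //=; [exact: tr1|exact: tr2].
have ltXirr a : ~~ ltX lt1 lt2 a a by case: a => a /=.
have pc_same p a b : a \in pc p -> b \in pc p -> side a = side b -> a = b.
  by rewrite !inE => /orP[]/eqP-> /orP[]/eqP->.
have ld_of p q a b : R p.1 p.2 -> R q.1 q.2 -> a \in pc p -> b \in pc q ->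
    ltX lt1 lt2 a b -> ld p q.
  case: p => u v; case: q => x y /= Ruv Rxy; rewrite !inE.
  move=> /orP[]/eqP-> /orP[]/eqP-> //= H; apply: ldlt => //; by rewrite H ?orbT.
have ldcon q q' : ld q q' -> (q' = q \/ ld q' q) -> R q.1 q.2 -> R q'.1 q'.2 -> False.
  move=> H [E|H2] Rq Rq'.
  - by move: H; rewrite E (negbTE (ldirr _ Rq)).
  - by have := ldtr _ _ _ Rq Rq' Rq H H2; rewrite (negbTE (ldirr _ Rq)).
pose E := fun P Q : {set X} => [&& P \in colsR R, Q \in colsR R &
   [exists a in P, exists b in Q, ltX lt1 lt2 a b]].
have EP P Q : E P Q -> [/\ P \in colsR R, Q \in colsR R &
   exists a b, [/\ a \in P, b \in Q & ltX lt1 lt2 a b]].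
  case/and3P => -> -> /existsP [a /andP [aP /existsP [b /andP [bQ H]]]].
  by split => //; exists a, b.
pose SP (P : {set X}) q := exists q', R q'.1 q'.2 /\
   (exists c e, [/\ c \in P, e \in pc q' & ltX lt1 lt2 c e]) /\ (q' = q \/ ld q' q).
pose Inv (P C : {set X}) :=
  (exists q, R q.1 q.2 /\ SP P q /\
     (C = pc q \/ exists e x, [/\ e \in pc q, x \in C & ltX lt1 lt2 e x]))
  \/ (exists c d, [/\ c \in P, d \in C & ltX lt1 lt2 c d]).
have step P C D : Inv P C -> E C D -> Inv P D.
  move=> Hinv /EP [Ccol Dcol [c' [d [c'C dD Hcd]]]].
  case: Hinv => [[q [Rq [SPq [Cq|[e [x [eq xC Hex]]]]]]]|[c [x [cP xC Hcx]]]].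
  - left; exists q; split => //; split => //; right; exists c', d.
    by rewrite -Cq.
  - case: (colsR_cases _ Ccol) => [[s [Rs Cs]]|[z [_ Cz]]].
    + have Hqs : ld q s by apply: (ld_of _ _ e x) => //; rewrite -Cs.
      left; exists s; split => //; split; last by right; exists c', d; rewrite -Cs.
      case: SPq => q' [Rq' [Hc [Eq|Hq]]].
      * by exists q'; split => //; split => //; right; rewrite Eq.
      * exists q'; split => //; split => //; right; exact: ldtr Hq Hqs.
    + move: xC c'C; rewrite Cz !inE => /eqP Ex /eqP Ec'.
      left; exists q; split => //; split => //; right; exists e, d; split => //.
      by apply: ltXtr Hex _; rewrite Ex -Ec'.
  - case: (colsR_cases _ Ccol) => [[s [Rs Cs]]|[z [_ Cz]]].
    + left; exists s; split => //; split; last by right; exists c', d; rewrite -Cs.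
      by exists s; split => //; split; [exists c, x; rewrite -Cs|left].
    + move: xC c'C; rewrite Cz !inE => /eqP Ex /eqP Ec'.
      right; exists c, d; split => //; apply: ltXtr Hcx _; by rewrite Ex -Ec'.
have base P D : E P D -> Inv P D.
  by case/EP => _ _ [a [b [aP bD H]]]; right; exists a, b.
have contra P : P \in colsR R -> Inv P P -> False.
  move=> Pcol.
  case => [[q [Rq [[q' [Rq' [[c [e' [cP e'q' Hce']]] Hq']]] [Pq|[e [x [eq xP Hex]]]]]]]|[c [d [cP dP H]]]].
  - apply: (ldcon q q') => //; apply: (ld_of _ _ c e') => //; by rewrite -Pq.
  - apply: (ldcon q q') => //.
    case: (colsR_cases _ Pcol) => [[s [Rs Ps]]|[z [_ Pz]]].
    + apply: (ldtr q s q') => //.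
      * by apply: (ld_of _ _ e x) => //; rewrite -Ps.
      * by apply: (ld_of _ _ c e') => //; rewrite -Ps.
    + move: xP cP; rewrite Pz !inE => /eqP Ex /eqP Ec.
      apply: (ld_of _ _ e e') => //; apply: ltXtr Hex _; by rewrite Ex -Ec.
  - case: (colsR_cases _ Pcol) => [[s [Rs Ps]]|[z [_ Pz]]].
    + move: cP dP; rewrite Ps => cP dP.
      have Ecd := pc_same _ _ _ cP dP (ltX_side H).
      by move: H; rewrite Ecd (negbTE (ltXirr d)).
    + move: cP dP H; rewrite Pz !inE => /eqP -> /eqP ->.
      by rewrite (negbTE (ltXirr z)).
have pathinv P S Q : Inv P S -> connect E S Q -> Inv P Q.
  move=> H /connectP [p pp ->].
  elim: p S H pp => //= b p IH a Ha /andP [Eab pp].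
  exact: IH (step _ _ _ Ha Eab) pp.
pose prec := fun P Q : {set X} => [exists S, E P S && connect E S Q].
have prec_irr P : P \in colsR R -> ~~ prec P P.
  move=> Pcol; apply/negP => /existsP [S /andP [EPS cSP]].
  exact: contra Pcol (pathinv _ _ _ (base _ _ EPS) cSP).
have prec_tr P Q S : prec P Q -> prec Q S -> prec P S.
  move=> /existsP [S1 /andP [E1 c1]] /existsP [S2 /andP [E2 c2]].
  apply/existsP; exists S1; rewrite E1 /=.
  apply: connect_trans c2; apply: connect_trans c1 _; exact: connect1.
have prec3 P Q x y : P \in colsR R -> Q \in colsR R -> x \in P -> y \in Q ->
    ltX lt1 lt2 x y -> prec P Q.
  move=> Pc Qc xP yQ H; apply/existsP; exists Q; rewrite connect0 andbT.
  rewrite /E Pc Qc /=; apply/existsP; exists x; rewrite xP /=.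
  by apply/existsP; exists y; rewrite yQ.
exists prec; rewrite /alignment colsE.
split; first by split.
split; first exact: prec_irr.
split; first by move=> P Q S _ _ _; exact: prec_tr.
split.
  move=> P Pc x y xP yP nxy.
  case: (colsR_cases _ Pc) => [[[u v] [Ruv Pp]]|[z [_ Pz]]].
  - move: xP yP nxy; rewrite Pp !inE /=.
    by move=> /orP[]/eqP-> /orP[]/eqP->; rewrite ?eqxx //= => _; rewrite ?Ruv.
  - by move: xP yP nxy; rewrite Pz !inE => /eqP -> /eqP ->; rewrite eqxx.
split.
  move=> P Pc x y xP yP sxy.
  case: (colsR_cases _ Pc) => [[p [Rp Pp]]|[z [_ Pz]]].
  - by move: xP yP; rewrite Pp => xP yP; exact: pc_same xP yP sxy.
  - by move: xP yP; rewrite Pz !inE => /eqP -> /eqP ->.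
split; first by move=> P Q Pc Qc x y; exact: prec3.
move=> P Q Pc Qc pPQ x y xP yQ sxy.
case Hxy: (ltX lt1 lt2 x y); first by left.
right; split; last split.
- move=> Exy; subst y.
  have PQ : P = Q.
    rewrite -colsE in Pc Qc.
    by rewrite (mem_cols gsym Pc xP) (mem_cols gsym Qc yQ).
  by move: pPQ; rewrite PQ (negbTE (prec_irr _ Qc)).
- by rewrite Hxy.
- apply/negP => Hyx.
  have := prec_tr _ _ _ pPQ (prec3 _ _ _ _ Qc Pc yQ xP Hyx).
  by rewrite (negbTE (prec_irr _ Pc)).
Qed.
End S.

Theorem lemma8 (T1 T2 : finType) (lt1 : rel T1) (lt2 : rel T2) :
  strict_po lt1 -> strict_po lt2 ->
  (* (i) *)
  (forall (A : rel (T1 + T2)) (prec : rel {set T1 + T2}),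
     alignment lt1 lt2 A prec ->
     let R := fun (x : T1) (y : T2) => A (inl x) (inr y) in
     [/\ propM R, propP' lt1 lt2 R,
         (forall a b : T1 + T2, A a b <->
            exists x y, R x y /\
              ((a = inl x /\ b = inr y) \/ (a = inr y /\ b = inl x)))
       & cols A = colsR R]) /\
  (* (ii) *)
  (forall R : T1 -> T2 -> bool,
     propM R -> propP' lt1 lt2 R ->
     cols (graphR R) = colsR R /\
     exists prec : rel {set T1 + T2}, alignment lt1 lt2 (graphR R) prec).
Proof.
move=> s1 s2; split.
- move=> A prec H; exact: part1 H.
- exact: part2.
Qed.
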